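(* The twisted torus $L_\gamma$ is Hamiltonian stationary if and only if the function $\rho|H|$ is constant on the torus (where $\rho$ is regarded as the function $(\alpha,\beta)\mapsto\rho(\beta)$).
   Context: Let $\gamma:\mathbb{R}/2\pi\mathbb{Z}\to\mathbb{C}\setminus\{0\}$ be a smooth regular simple closed curve written as $\gamma(\beta)=\rho(\beta)e^{if(\beta)}$ with $\rho>0$ smooth and $2\pi$-periodic and $f$ smooth with $f(\beta+2\pi)=f(\beta)+2k\pi$, $k\in\mathbb{Z}$. The twisted torus $L_\gamma$ is the image of the Lagrangian immersion $F(\alpha,\beta)=\frac{\rho(\beta)}{\sqrt2}\left(e^{i(f(\beta)+\alpha)},e^{i(f(\beta)-\alpha)}\right)$ into $\mathbb{C}^2$ (Euclidean metric, complex structure $J$ = multiplication by $i$). $g$ is the induced metric, $H$ the mean curvature vector ($g$-trace of the second fundamental form, no normalizing factor), $|H|$ its Euclidean length. $L_\gamma$ is Hamiltonian stationary if it is a critical point of area under all variations with variation field $J\nabla h$, $h\in C^\infty(L_\gamma)$; equivalently (Oh) $\mathrm{div}_g(JH)=0$. *)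

(* Defs.v *)
From Stdlib Require Import Reals ZArith.
From Coquelicot Require Import Coquelicot.
Open Scope R_scope.

(** Vectors of C^2 = R^4, coordinates (Re z1, Im z1, Re z2, Im z2). *)
Record vec4 := mkV { c1 : R; c2 : R; c3 : R; c4 : R }.

Definition vadd (u v : vec4) : vec4 :=
  mkV (c1 u + c1 v) (c2 u + c2 v) (c3 u + c3 v) (c4 u + c4 v).
Definition vscal (s : R) (u : vec4) : vec4 :=
  mkV (s * c1 u) (s * c2 u) (s * c3 u) (s * c4 u).
Definition vsub (u v : vec4) : vec4 := vadd u (vscal (-1) v).
Definition dot (u v : vec4) : R :=
  c1 u * c1 v + c2 u * c2 v + c3 u * c3 v + c4 u * c4 v.
Definition vnorm (u : vec4) : R := sqrt (dot u u).
(** Complex structure J = multiplication by i on each factor. *)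
Definition Jv (u : vec4) : vec4 := mkV (- c2 u) (c1 u) (- c4 u) (c3 u).

Definition pa (V : R -> R -> vec4) (a b : R) : vec4 :=
  mkV (Derive (fun x => c1 (V x b)) a) (Derive (fun x => c2 (V x b)) a)
      (Derive (fun x => c3 (V x b)) a) (Derive (fun x => c4 (V x b)) a).
Definition pb (V : R -> R -> vec4) (a b : R) : vec4 :=
  mkV (Derive (fun y => c1 (V a y)) b) (Derive (fun y => c2 (V a y)) b)
      (Derive (fun y => c3 (V a y)) b) (Derive (fun y => c4 (V a y)) b).

Section Geometry.
Variable F : R -> R -> vec4.

Definition g11 a b := dot (pa F a b) (pa F a b).
Definition g12 a b := dot (pa F a b) (pb F a b).
Definition g22 a b := dot (pb F a b) (pb F a b).
Definition detg a b := g11 a b * g22 a b - g12 a b ^ 2.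
Definition gi11 a b := g22 a b / detg a b.
Definition gi12 a b := - g12 a b / detg a b.
Definition gi22 a b := g11 a b / detg a b.

Definition tangent_part (a b : R) (v : vec4) : vec4 :=
  let ca := gi11 a b * dot v (pa F a b) + gi12 a b * dot v (pb F a b) in
  let cb := gi12 a b * dot v (pa F a b) + gi22 a b * dot v (pb F a b) in
  vadd (vscal ca (pa F a b)) (vscal cb (pb F a b)).
Definition perp (a b : R) (v : vec4) : vec4 := vsub v (tangent_part a b v).

(** Mean curvature vector H = g^{ij} II(d_i, d_j), II(d_i,d_j) = (d_i d_j F)^perp
    (trace, no normalizing factor). *)
Definition meanH (a b : R) : vec4 :=
  vadd (vscal (gi11 a b) (perp a b (pa (pa F) a b)))
  (vadd (vscal (2 * gi12 a b) (perp a b (pb (pa F) a b)))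
        (vscal (gi22 a b) (perp a b (pb (pb F) a b)))).

(** Divergence (w.r.t. g) of a vector field V along the immersion:
    div_g V = g^{ij} <d_i V, d_j F>; for V tangent this is the intrinsic
    Riemannian divergence. *)
Definition div_g (V : R -> R -> vec4) (a b : R) : R :=
  gi11 a b * dot (pa V a b) (pa F a b)
  + gi12 a b * (dot (pa V a b) (pb F a b) + dot (pb V a b) (pa F a b))
  + gi22 a b * dot (pb V a b) (pb F a b).

(** Hamiltonian stationary, in Oh's form div_g (J H) = 0. *)
Definition hamiltonian_stationary : Prop :=
  forall a b, div_g (fun a' b' => Jv (meanH a' b')) a b = 0.
End Geometry.

Definition smooth (h : R -> R) : Prop :=
  forall (n : nat) (x : R), ex_derive (Derive_n h n) x.

Definition twisted_torus (rho f : R -> R) (a b : R) : vec4 :=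
  let r := rho b / sqrt 2 in
  mkV (r * cos (f b + a)) (r * sin (f b + a)) (r * cos (f b - a)) (r * sin (f b - a)).

Definition gamma_re (rho f : R -> R) (b : R) := rho b * cos (f b).
Definition gamma_im (rho f : R -> R) (b : R) := rho b * sin (f b).

(* Main.v *)
Require Import Defs.
From Stdlib Require Import Reals ZArith Lra.
From Coquelicot Require Import Coquelicot.
Open Scope R_scope.


Definition cmb (f : R -> R) (a b x y z t : R) : vec4 :=
  let s := / sqrt 2 in
  let th1 := f b + a in let th2 := f b - a in
  mkV (s * (x * cos th1 - y * sin th1 - z * sin th1 - t * cos th1))
      (s * (x * sin th1 + y * cos th1 + z * cos th1 - t * sin th1))
      (s * (x * cos th2 - y * sin th2 + z * sin th2 + t * cos th2))
      (s * (x * sin th2 + y * cos th2 - z * cos th2 + t * sin th2)).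

Lemma cmb_eq f a b x y z t x' y' z' t' :
  x = x' -> y = y' -> z = z' -> t = t' -> cmb f a b x y z t = cmb f a b x' y' z' t'.
Proof. intros; subst; reflexivity. Qed.

Lemma vadd_cmb f a b x y z t x' y' z' t' :
  vadd (cmb f a b x y z t) (cmb f a b x' y' z' t') = cmb f a b (x+x') (y+y') (z+z') (t+t').
Proof. unfold vadd, cmb; simpl; f_equal; ring. Qed.

Lemma vscal_cmb f a b k x y z t :
  vscal k (cmb f a b x y z t) = cmb f a b (k*x) (k*y) (k*z) (k*t).
Proof. unfold vscal, cmb; simpl; f_equal; ring. Qed.

Lemma vsub_cmb f a b x y z t x' y' z' t' :
  vsub (cmb f a b x y z t) (cmb f a b x' y' z' t') = cmb f a b (x-x') (y-y') (z-z') (t-t').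
Proof. unfold vsub; rewrite vscal_cmb, vadd_cmb; apply cmb_eq; ring. Qed.

Lemma Jv_cmb f a b x y z t :
  Jv (cmb f a b x y z t) = cmb f a b (-y) x (-t) z.
Proof. unfold Jv, cmb; simpl; f_equal; ring. Qed.

Lemma s2 : / sqrt 2 * / sqrt 2 = / 2.
Proof. rewrite <- Rinv_mult, sqrt_sqrt; lra. Qed.

Lemma dot_cmb f a b x y z t x' y' z' t' :
  dot (cmb f a b x y z t) (cmb f a b x' y' z' t') = x*x' + y*y' + z*z' + t*t'.
Proof.
  unfold dot, cmb; simpl.
  set (c1 := cos (f b + a)); set (s1 := sin (f b + a));
  set (c2 := cos (f b - a)); set (s2' := sin (f b - a)).
  assert (H1 : c1 * c1 + s1 * s1 = 1) by (unfold c1, s1; rewrite <- !Rsqr_def; rewrite Rplus_comm; apply sin2_cos2).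
  assert (H2 : c2 * c2 + s2' * s2' = 1) by (unfold c2, s2'; rewrite <- !Rsqr_def; rewrite Rplus_comm; apply sin2_cos2).
  transitivity (/ sqrt 2 * / sqrt 2 * ((c1*c1+s1*s1) * ((x-t)*(x'-t') + (y+z)*(y'+z'))
     + (c2*c2+s2'*s2') * ((x+t)*(x'+t') + (y-z)*(y'-z')))).
  - ring.
  - rewrite H1, H2, s2; field.
Qed.


Lemma pa_cmb f (V : R -> R -> vec4) (x y z t : R -> R) a b :
  (forall a b, V a b = cmb f a b (x b) (y b) (z b) (t b)) ->
  pa V a b = cmb f a b (- z b) (- t b) (x b) (y b).
Proof.
  intro HV. unfold pa.
  rewrite (Derive_ext _ (fun a0 => Defs.c1 (cmb f a0 b (x b) (y b) (z b) (t b))))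
    by (intro; rewrite HV; reflexivity).
  rewrite (Derive_ext (fun a0 => c2 (V a0 b)) (fun a0 => c2 (cmb f a0 b (x b) (y b) (z b) (t b))))
    by (intro; rewrite HV; reflexivity).
  rewrite (Derive_ext (fun a0 => c3 (V a0 b)) (fun a0 => c3 (cmb f a0 b (x b) (y b) (z b) (t b))))
    by (intro; rewrite HV; reflexivity).
  rewrite (Derive_ext (fun a0 => c4 (V a0 b)) (fun a0 => c4 (cmb f a0 b (x b) (y b) (z b) (t b))))
    by (intro; rewrite HV; reflexivity).
  unfold cmb; simpl; f_equal; apply is_derive_unique; auto_derive; try exact I; unfold Rminus; ring.
Qed.

Lemma pb_cmb f (V : R -> R -> vec4) (x y z t : R -> R) a b :
  ex_derive f b -> ex_derive x b -> ex_derive y b -> ex_derive z b -> ex_derive t b ->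
  (forall a b, V a b = cmb f a b (x b) (y b) (z b) (t b)) ->
  pb V a b = cmb f a b (Derive x b - Derive f b * y b) (Derive y b + Derive f b * x b)
                       (Derive z b - Derive f b * t b) (Derive t b + Derive f b * z b).
Proof.
  intros Df Dx Dy Dz Dt HV. unfold pb.
  rewrite (Derive_ext (fun b0 => Defs.c1 (V a b0)) (fun b0 => Defs.c1 (cmb f a b0 (x b0) (y b0) (z b0) (t b0))))
    by (intro; rewrite HV; reflexivity).
  rewrite (Derive_ext (fun b0 => Defs.c2 (V a b0)) (fun b0 => Defs.c2 (cmb f a b0 (x b0) (y b0) (z b0) (t b0))))
    by (intro; rewrite HV; reflexivity).
  rewrite (Derive_ext (fun b0 => Defs.c3 (V a b0)) (fun b0 => Defs.c3 (cmb f a b0 (x b0) (y b0) (z b0) (t b0))))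
    by (intro; rewrite HV; reflexivity).
  rewrite (Derive_ext (fun b0 => Defs.c4 (V a b0)) (fun b0 => Defs.c4 (cmb f a b0 (x b0) (y b0) (z b0) (t b0))))
    by (intro; rewrite HV; reflexivity).
  unfold cmb; simpl; f_equal; apply is_derive_unique; auto_derive; try (repeat split; assumption); try change (Derive (fun x0 => x x0) b) with (Derive x b); try change (Derive (fun x0 => y x0) b) with (Derive y b); try change (Derive (fun x0 => z x0) b) with (Derive z b); try change (Derive (fun x0 => t x0) b) with (Derive t b); try change (Derive (fun x0 => f x0) b) with (Derive f b); unfold Rminus; ring.
Qed.


Section S.
Context (rho f : R -> R) (Hr : smooth rho) (Hf : smooth f).

Let Fm := twisted_torus rho f.

Lemma F_cmb a b : Fm a b = cmb f a b (rho b) 0 0 0.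
Proof. unfold Fm, twisted_torus, cmb; simpl; f_equal; unfold Rdiv; ring. Qed.

Lemma exr0 b : ex_derive rho b. Proof. exact (Hr 0%nat b). Qed.
Lemma exr1 b : ex_derive (Derive rho) b. Proof. exact (Hr 1%nat b). Qed.
Lemma exr2 b : ex_derive (Derive (Derive rho)) b. Proof. exact (Hr 2%nat b). Qed.
Lemma exf0 b : ex_derive f b. Proof. exact (Hf 0%nat b). Qed.
Lemma exf1 b : ex_derive (Derive f) b. Proof. exact (Hf 1%nat b). Qed.
Lemma exf2 b : ex_derive (Derive (Derive f)) b. Proof. exact (Hf 2%nat b). Qed.
Lemma ex0 b : ex_derive (fun _ : R => 0) b. Proof. apply ex_derive_const. Qed.

Lemma paF a b : pa Fm a b = cmb f a b 0 0 (rho b) 0.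
Proof.
  rewrite (pa_cmb f Fm rho (fun _ => 0) (fun _ => 0) (fun _ => 0)) by apply F_cmb.
  apply cmb_eq; ring.
Qed.

Lemma pbF a b : pb Fm a b = cmb f a b (Derive rho b) (rho b * Derive f b) 0 0.
Proof.
  rewrite (pb_cmb f Fm rho (fun _ => 0) (fun _ => 0) (fun _ => 0));
    try apply exr0; try apply exf0; try apply ex0; try apply F_cmb.
  rewrite !Derive_const. apply cmb_eq; ring.
Qed.

Lemma paaF a b : pa (pa Fm) a b = cmb f a b (- rho b) 0 0 0.
Proof.
  rewrite (pa_cmb f (pa Fm) (fun _ => 0) (fun _ => 0) rho (fun _ => 0)) by apply paF.
  apply cmb_eq; ring.
Qed.

Lemma pbaF a b : pb (pa Fm) a b = cmb f a b 0 0 (Derive rho b) (rho b * Derive f b).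
Proof.
  rewrite (pb_cmb f (pa Fm) (fun _ => 0) (fun _ => 0) rho (fun _ => 0));
    try apply exr0; try apply exf0; try apply ex0; try apply paF.
  rewrite !Derive_const. apply cmb_eq; ring.
Qed.

Lemma pbbF a b : pb (pb Fm) a b =
  cmb f a b (Derive (Derive rho) b - rho b * Derive f b ^ 2)
            (2 * Derive rho b * Derive f b + rho b * Derive (Derive f) b) 0 0.
Proof.
  rewrite (pb_cmb f (pb Fm) (Derive rho) (fun y => rho y * Derive f y) (fun _ => 0) (fun _ => 0));
    try apply exr1; try apply exf0; try apply ex0; try apply pbF.
  - rewrite !Derive_const, Derive_mult by (apply exr0 || apply exf1). apply cmb_eq; ring.
  - apply ex_derive_mult; [apply exr0 | apply exf1].
Qed.

Definition q b := Derive rho b ^ 2 + rho b ^ 2 * Derive f b ^ 2.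

Lemma g11F a b : g11 Fm a b = rho b ^ 2.
Proof. unfold g11; rewrite paF, dot_cmb; ring. Qed.
Lemma g12F a b : g12 Fm a b = 0.
Proof. unfold g12; rewrite paF, pbF, dot_cmb; ring. Qed.
Lemma g22F a b : g22 Fm a b = q b.
Proof. unfold g22, q; rewrite pbF, dot_cmb; ring. Qed.

End S.


Definition Num (rho f : R -> R) b :=
  3 * Derive rho b ^ 2 * Derive f b + 2 * rho b ^ 2 * Derive f b ^ 3
  + rho b * Derive rho b * Derive (Derive f) b - rho b * Derive (Derive rho) b * Derive f b.
Definition K (rho f : R -> R) b := Num rho f b / q rho f b ^ 2.

Lemma meanHF rho f (Hr : smooth rho) (Hf : smooth f) a b :
  rho b <> 0 -> q rho f b <> 0 ->
  meanH (twisted_torus rho f) a b =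
  cmb f a b (- K rho f b * rho b * Derive f b) (K rho f b * Derive rho b) 0 0.
Proof.
  intros H0 Hq.
  unfold meanH, perp, tangent_part, gi11, gi12, gi22, detg. cbv zeta.
  rewrite !paaF, !pbaF, !pbbF, !paF, !pbF, !g11F, !g12F, !g22F by assumption.
  repeat (rewrite ?dot_cmb, ?vscal_cmb, ?vsub_cmb, ?vadd_cmb).
  replace (rho b ^ 2 * q rho f b - 0 ^ 2) with (rho b ^ 2 * q rho f b) by ring.
  unfold K, Num. unfold q in *.
  apply cmb_eq; field; (split; [intro HH; apply Hq; rewrite <- HH; ring | exact H0]).
Qed.


Ltac exs := repeat match goal with |- _ /\ _ => split end;
  try exact I; try (apply exr0; assumption); try (apply exr1; assumption);
  try (apply exr2; assumption); try (apply exf0; assumption);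
  try (apply exf1; assumption); try (apply exf2; assumption).

Ltac etaD := repeat match goal with |- context [Derive (fun x => ?g x) ?b] => change (Derive (fun x => g x) b) with (Derive g b) end.

Lemma exq rho f (Hr : smooth rho) (Hf : smooth f) b : ex_derive (q rho f) b.
Proof. unfold q. auto_derive. exs. Qed.

Lemma Dq rho f (Hr : smooth rho) (Hf : smooth f) b : Derive (q rho f) b =
  2 * Derive rho b * Derive (Derive rho) b + 2 * rho b * Derive rho b * Derive f b ^ 2
  + 2 * rho b ^ 2 * Derive f b * Derive (Derive f) b.
Proof.
  apply is_derive_unique. unfold q. auto_derive.
  - exs.
  - etaD; ring.
Qed.

Lemma exK rho f (Hr : smooth rho) (Hf : smooth f) b : q rho f b <> 0 -> ex_derive (K rho f) b.
Proof.
  intro Hq. unfold K, Num. unfold q in *. auto_derive. exs.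
  rewrite Rmult_1_r; apply Rmult_integral_contrapositive; split; intro HH; apply Hq; rewrite <- HH; ring.
Qed.

Ltac exg := repeat match goal with |- _ /\ _ => split end; try exact I; auto.

Lemma D2gen (k u : R -> R) b : ex_derive k b -> ex_derive u b ->
  Derive (fun y => - (k y * u y)) b = - (Derive k b * u b + k b * Derive u b).
Proof. intros. apply is_derive_unique; auto_derive; [ exg | etaD; ring ]. Qed.

Lemma D3gen (k u v : R -> R) b : ex_derive k b -> ex_derive u b -> ex_derive v b ->
  Derive (fun y => - (k y * u y * v y)) b =
  - (Derive k b * u b * v b + k b * Derive u b * v b + k b * u b * Derive v b).
Proof. intros. apply is_derive_unique; auto_derive; [ exg | etaD; ring ]. Qed.

Lemma exD2 (k u : R -> R) b : ex_derive k b -> ex_derive u b ->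
  ex_derive (fun y => - (k y * u y)) b.
Proof. intros. auto_derive. exg. Qed.
Lemma exD3 (k u v : R -> R) b : ex_derive k b -> ex_derive u b -> ex_derive v b ->
  ex_derive (fun y => - (k y * u y * v y)) b.
Proof. intros. auto_derive. exg. Qed.

Lemma DPgen (u g k : R -> R) b : ex_derive u b -> ex_derive g b -> ex_derive k b -> 0 < g b ->
  Derive (fun y => u y * sqrt (g y) * k y) b =
  Derive u b * sqrt (g b) * k b + u b * (Derive g b / (2 * sqrt (g b))) * k b
  + u b * sqrt (g b) * Derive k b.
Proof. intros. apply is_derive_unique; auto_derive; [ exg | etaD; field; apply Rgt_not_eq, sqrt_lt_R0; auto ]. Qed.

Lemma exPgen (u g k : R -> R) b : ex_derive u b -> ex_derive g b -> ex_derive k b -> 0 < g b ->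
  ex_derive (fun y => u y * sqrt (g y) * k y) b.
Proof. intros. auto_derive. exg. Qed.


Definition PP rho f y := rho y * sqrt (q rho f y) * K rho f y.

Lemma divF rho f (Hr : smooth rho) (Hf : smooth f)
  (Hpos : forall y, 0 < rho y) (Hqpos : forall y, 0 < q rho f y) a b :
  div_g (twisted_torus rho f) (fun a' b' => Jv (meanH (twisted_torus rho f) a' b')) a b
  = - Derive (PP rho f) b / (rho b * sqrt (q rho f b)).
Proof.
  set (Fm := twisted_torus rho f).
  set (X := fun y => - (K rho f y * Derive rho y)).
  set (Y := fun y => - (K rho f y * rho y * Derive f y)).
  assert (HJ : forall a b, Jv (meanH Fm a b) = cmb f a b (X b) (Y b) 0 0).
  { intros a0 b0. unfold Fm. rewrite meanHF, Jv_cmb; auto.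
    - apply cmb_eq; unfold X, Y; ring.
    - apply Rgt_not_eq, Hpos.
    - apply Rgt_not_eq, Hqpos. }
  assert (ExK : forall y, ex_derive (K rho f) y) by (intro; apply exK; auto; apply Rgt_not_eq, Hqpos).
  assert (DX : Derive X b = - (Derive (K rho f) b * Derive rho b + K rho f b * Derive (Derive rho) b)).
  { unfold X; apply D2gen; auto; apply exr1; auto. }
  assert (DY : Derive Y b = - (Derive (K rho f) b * rho b * Derive f b + K rho f b * Derive rho b * Derive f b
       + K rho f b * rho b * Derive (Derive f) b)).
  { unfold Y; apply D3gen; auto; [apply exr0 | apply exf1]; auto. }
  unfold div_g.
  rewrite (pa_cmb f _ X Y (fun _ => 0) (fun _ => 0) a b HJ).
  rewrite (pb_cmb f (fun a' b' => Jv (meanH Fm a' b')) X Y (fun _ => 0) (fun _ => 0) a b); auto.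
  2: apply exf0; auto.
  2: unfold X; apply exD2; auto; apply exr1; auto.
  2: unfold Y; apply exD3; auto; [apply exr0 | apply exf1]; auto.
  2,3: apply ex_derive_const.
  unfold Fm; rewrite paF, pbF by auto.
  rewrite !Derive_const, !dot_cmb, DX, DY.
  unfold gi11, gi12, gi22, detg. rewrite g11F, g12F, g22F by auto.
  unfold PP. rewrite DPgen; auto; [| apply exr0; auto | apply exq; auto].
  rewrite Dq by auto.
  unfold X, Y; cbv beta.
  assert (Hq := Hqpos b). assert (Hp := Hpos b).
  assert (HS : sqrt (q rho f b) * sqrt (q rho f b) = q rho f b) by (apply sqrt_sqrt; lra).
  assert (HS0 : 0 < sqrt (q rho f b)) by (apply sqrt_lt_R0; lra).
  set (S := sqrt (q rho f b)) in *.
  set (Dqx := 2 * Derive rho b * Derive (Derive rho) b + 2 * rho b * Derive rho b * Derive f b ^ 2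
     + 2 * rho b ^ 2 * Derive f b * Derive (Derive f) b).
  match goal with |- _ = ?R => replace R with
    (- (Derive rho b * K rho f b / rho b) - Dqx * K rho f b / (2 * (S * S)) - Derive (K rho f) b)
    by (field; split; lra) end.
  rewrite HS. unfold Dqx. unfold q in *.
  field. lra.
Qed.


Lemma q_pos rho f (Hr : smooth rho) (Hf : smooth f) b :
  (Derive (gamma_re rho f) b <> 0 \/ Derive (gamma_im rho f) b <> 0) -> 0 < q rho f b.
Proof.
  intro H.
  assert (E1 : Derive (gamma_re rho f) b = Derive rho b * cos (f b) - rho b * Derive f b * sin (f b)).
  { apply is_derive_unique; unfold gamma_re; auto_derive; [exg; [apply exr0|apply exf0]; auto | etaD; ring]. }
  assert (E2 : Derive (gamma_im rho f) b = Derive rho b * sin (f b) + rho b * Derive f b * cos (f b)).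
  { apply is_derive_unique; unfold gamma_im; auto_derive; [exg; [apply exr0|apply exf0]; auto | etaD; ring]. }
  rewrite E1, E2 in H.
  assert (HE : q rho f b = (Derive rho b * cos (f b) - rho b * Derive f b * sin (f b))^2
     + (Derive rho b * sin (f b) + rho b * Derive f b * cos (f b))^2).
  { unfold q. assert (T := sin2_cos2 (f b)). unfold Rsqr in T.
    transitivity ((Derive rho b ^ 2 + rho b ^ 2 * Derive f b ^ 2) * (sin (f b) * sin (f b) + cos (f b) * cos (f b))).
    - rewrite T; ring.
    - ring. }
  rewrite HE. destruct H as [H|H].
  - assert (0 < (Derive rho b * cos (f b) - rho b * Derive f b * sin (f b))^2) by (apply pow2_gt_0; auto).
    assert (0 <= (Derive rho b * sin (f b) + rho b * Derive f b * cos (f b))^2) by apply pow2_ge_0. lra.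
  - assert (0 < (Derive rho b * sin (f b) + rho b * Derive f b * cos (f b))^2) by (apply pow2_gt_0; auto).
    assert (0 <= (Derive rho b * cos (f b) - rho b * Derive f b * sin (f b))^2) by apply pow2_ge_0. lra.
Qed.

Theorem mainTheorem6 (rho f : R -> R) (k : Z)
  (rho_smooth : smooth rho) (f_smooth : smooth f)
  (rho_pos : forall b, 0 < rho b)
  (rho_per : forall b, rho (b + 2 * PI) = rho b)
  (f_per : forall b, f (b + 2 * PI) = f b + 2 * IZR k * PI)
  (* gamma is regular *)
  (gamma_regular : forall b,
     Derive (gamma_re rho f) b <> 0 \/ Derive (gamma_im rho f) b <> 0)
  (* gamma is simple on one period *)
  (gamma_simple : forall b1 b2, 0 <= b1 < 2 * PI -> 0 <= b2 < 2 * PI ->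
     gamma_re rho f b1 = gamma_re rho f b2 ->
     gamma_im rho f b1 = gamma_im rho f b2 -> b1 = b2) :
  hamiltonian_stationary (twisted_torus rho f) <->
  exists c : R, forall a b : R,
    rho b * vnorm (meanH (twisted_torus rho f) a b) = c.
Proof.
  assert (Hq : forall y, 0 < q rho f y) by (intro; apply q_pos; auto).
  assert (ExP : forall y, ex_derive (PP rho f) y).
  { intro y. unfold PP. apply exPgen; [apply exr0; auto | apply exq; auto | apply exK; auto; apply Rgt_not_eq, Hq | auto]. }
  assert (Hnorm : forall a b, rho b * vnorm (meanH (twisted_torus rho f) a b) = Rabs (PP rho f b)).
  { intros a b. rewrite meanHF; auto; [| apply Rgt_not_eq, rho_pos | apply Rgt_not_eq, Hq].
    unfold vnorm; rewrite dot_cmb.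
    replace (- K rho f b * rho b * Derive f b * (- K rho f b * rho b * Derive f b) +
      K rho f b * Derive rho b * (K rho f b * Derive rho b) + 0 * 0 + 0 * 0)
      with (Rsqr (K rho f b) * q rho f b) by (unfold q, Rsqr; ring).
    rewrite sqrt_mult by (try apply Rle_0_sqr; apply Rlt_le; auto).
    rewrite sqrt_Rsqr_abs. unfold PP. rewrite !Rabs_mult.
    rewrite (Rabs_pos_eq (rho b)) by (apply Rlt_le; auto).
    rewrite (Rabs_pos_eq (sqrt (q rho f b))) by apply sqrt_pos. ring. }
  assert (Hdiv : forall a b, div_g (twisted_torus rho f)
      (fun a' b' => Jv (meanH (twisted_torus rho f) a' b')) a b = 0 <-> Derive (PP rho f) b = 0).
  { intros a b. rewrite divF; auto.
    assert (0 < rho b * sqrt (q rho f b)) by (apply Rmult_lt_0_compat; [auto | apply sqrt_lt_R0; auto]).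
    split; intro H0.
    - unfold Rdiv in H0. apply Rmult_integral in H0. destruct H0 as [H0|H0].
      + lra.
      + exfalso. apply Rinv_neq_0_compat in H0; auto; lra.
    - rewrite H0. unfold Rdiv. ring. }
  unfold hamiltonian_stationary. split.
  - intro HS. exists (Rabs (PP rho f 0)). intros a b. rewrite Hnorm. f_equal.
    assert (HD : forall t, is_derive (PP rho f) t 0).
    { intro t. assert (E : Derive (PP rho f) t = 0) by (apply (Hdiv 0); apply HS).
      rewrite <- E. apply Derive_correct, ExP. }
    destruct (Rtotal_order b 0) as [Hb|[Hb|Hb]].
    + apply (eq_is_derive (PP rho f) b 0); auto.
    + subst; reflexivity.
    + symmetry. apply (eq_is_derive (PP rho f) 0 b); auto.
  - intros [c Hc] a b. apply Hdiv.
    assert (Hc' : forall y, Rabs (PP rho f y) = c) by (intro y; rewrite <- (Hnorm 0); apply Hc).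
    destruct (Req_dec c 0) as [Hc0|Hc0].
    + rewrite (Derive_ext (PP rho f) (fun _ => 0)); [apply Derive_const|].
      intro t. specialize (Hc' t). rewrite Hc0 in Hc'.
      destruct (Req_dec (PP rho f t) 0); auto. apply Rabs_no_R0 in H; lra.
    + assert (Hsq : forall y, PP rho f y * PP rho f y = c * c).
      { intro y. rewrite <- (Hc' y). rewrite <- Rabs_mult. rewrite Rabs_pos_eq; auto.
        apply Rle_0_sqr. }
      assert (E : Derive (fun y => PP rho f y * PP rho f y) b = 0).
      { rewrite (Derive_ext _ (fun _ => c * c)) by apply Hsq. apply Derive_const. }
      rewrite Derive_mult in E by apply ExP.
      assert (PP rho f b <> 0).
      { intro HH. specialize (Hc' b). rewrite HH, Rabs_R0 in Hc'. auto. }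
      assert (2 * PP rho f b * Derive (PP rho f) b = 0) by lra.
      apply Rmult_integral in H0. destruct H0 as [H0|H0]; auto. lra.
Qed.
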